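(* Let $L$ be a totally ordered normal incline and let $A$ be an $n\times n$ completely positive matrix over $L$. Then $\mathrm{CP\text{-}rank}(A)\le n$ for $n=2,3$.
   Context: An incline is a nonempty set $L$ with binary operations $\oplus,\otimes$ such that $(L,\oplus)$ is a semilattice ($\oplus$ associative, commutative, idempotent), $(L,\otimes)$ is a semigroup, $x\otimes(y\oplus z)=(x\otimes y)\oplus(x\otimes z)$ and $x\oplus(x\otimes y)=x$ for all $x,y,z$. The order is $x\le y\iff x\oplus y=y$; $L$ is totally ordered if this order is total, and commutative if $\otimes$ is commutative. An r-ideal is a nonempty $J\subseteq L$ closed under $\oplus$ and under multiplication by arbitrary elements of $L$; a lattice ideal is a nonempty $J\subseteq L$ closed under $\oplus$ and downward closed. A commutative incline $L$ is normal if it has an additive identity $\mathbf{0}$ and a multiplicative identity $\mathbf{1}$ and: every singly generated r-ideal is a lattice ideal (LI-property); for each $x\in L$ there is a unique $c$ with $c\otimes c=x$ (unique square root property); $x\otimes y\le(x\otimes x)\oplus(y\otimes y)$ for all $x,y$ (AG-property). Matrix product: $(BC)_{ij}=\bigoplus_k b_{ik}\otimes c_{kj}$; $B^T$ is the transpose. $A$ is completely positive if $A=BB^T$ for some $n\times k$ matrix $B$ over $L$ all of whose entries are of the form $c\otimes c$. The CP-rank of a completely positive $A$ is the smallest $k$ such that $A=BB^T$ with $B$ an $n\times k$ matrix over $L$. *)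

(* Defs.v *)
From mathcomp Require Import all_boot.
Set Implicit Arguments. Unset Strict Implicit. Unset Printing Implicit Defensive.

Section Incline.
Variables (T : Type) (add mul : T -> T -> T).

Definition is_incline : Prop :=
  (forall x y z, add x (add y z) = add (add x y) z) /\
  (forall x y, add x y = add y x) /\
  (forall x, add x x = x) /\
  (forall x y z, mul x (mul y z) = mul (mul x y) z) /\
  (forall x y z, mul x (add y z) = add (mul x y) (mul x z)) /\
  (forall x y, add x (mul x y) = x).

Definition ile (x y : T) : Prop := add x y = y.

Definition totally_ordered : Prop := forall x y, ile x y \/ ile y x.

Definition commutative_incline : Prop := forall x y, mul x y = mul y x.

Definition r_ideal (J : T -> Prop) : Prop :=
  (exists x, J x) /\
  (forall x y, J x -> J y -> J (add x y)) /\
  (forall x a, J x -> J (mul a x) /\ J (mul x a)).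

Definition lattice_ideal (J : T -> Prop) : Prop :=
  (exists x, J x) /\
  (forall x y, J x -> J y -> J (add x y)) /\
  (forall x y, J x -> ile y x -> J y).

Definition gen_r_ideal (a : T) : T -> Prop :=
  fun x => forall J, r_ideal J -> J a -> J x.

Definition LI_property : Prop := forall a, lattice_ideal (gen_r_ideal a).

Definition unique_sqrt_property : Prop :=
  forall x, exists c, mul c c = x /\ forall d, mul d d = x -> d = c.

Definition AG_property : Prop :=
  forall x y, ile (mul x y) (add (mul x x) (mul y y)).

Definition normal_incline (zero one : T) : Prop :=
  is_incline /\ commutative_incline /\
  (forall x, add zero x = x /\ add x zero = x) /\
  (forall x, mul one x = x /\ mul x one = x) /\
  LI_property /\ unique_sqrt_property /\ AG_property.

Variable zero : T.

Definition mx_mul_tr (n k : nat) (B C : 'I_n -> 'I_k -> T) : 'I_n -> 'I_n -> T :=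
  fun i j => \big[add/zero]_(l < k) mul (B i l) (C j l).

Definition is_square (x : T) : Prop := exists c, mul c c = x.

Definition cp_factorization (n k : nat) (A : 'I_n -> 'I_n -> T)
    (B : 'I_n -> 'I_k -> T) : Prop :=
  (forall i l, is_square (B i l)) /\ (forall i j, A i j = mx_mul_tr B B i j).

Definition completely_positive (n : nat) (A : 'I_n -> 'I_n -> T) : Prop :=
  exists k (B : 'I_n -> 'I_k -> T), cp_factorization A B.

Definition cp_rank_le (n : nat) (A : 'I_n -> 'I_n -> T) (m : nat) : Prop :=
  exists k (B : 'I_n -> 'I_k -> T), (k <= m)%N /\ cp_factorization A B.

End Incline.

(* Main.v *)
Require Import Defs.
From mathcomp Require Import all_boot.
Set Implicit Arguments. Unset Strict Implicit. Unset Printing Implicit Defensive.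

Ltac destrL HL :=
  let hA := fresh "hA" in let hC := fresh "hC" in let hI := fresh "hI" in
  let mA := fresh "mA" in let dist := fresh "dist" in let absb := fresh "absb" in
  let mC := fresh "mC" in let h0 := fresh "h0" in let h1 := fresh "h1" in
  let hLI := fresh "hLI" in let hsq := fresh "hsq" in let hAG := fresh "hAG" in
  case: HL => [[hA [hC [hI [mA [dist absb]]]]] [mC [h0 [h1 [hLI [hsq hAG]]]]]].



Lemma L_mul0 T add mul (zero one : T) (HL : normal_incline add mul zero one) x :
  mul zero x = zero /\ mul x zero = zero.
Proof.
destrL HL. have e : mul zero x = zero.
  by rewrite -{2}(absb zero x) (proj1 (h0 _)).
by split => //; rewrite mC.
Qed.

Lemma L_trans T (add : T -> T -> T) x y z :
  (forall x y z, add x (add y z) = add (add x y) z) ->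
  ile add x y -> ile add y z -> ile add x z.
Proof. by rewrite /ile => hA e1 e2; rewrite -e2 hA e1. Qed.

Lemma L_monol T add mul (zero one : T) (HL : normal_incline add mul zero one) x y z :
  ile add x y -> ile add (mul z x) (mul z y).
Proof. destrL HL. by rewrite /ile => e; rewrite -dist e. Qed.

Lemma L_mono2 T add mul (zero one : T) (HL : normal_incline add mul zero one) x y u v :
  ile add x y -> ile add u v -> ile add (mul x u) (mul y v).
Proof.
move=> e1 e2. have hA : forall x y z, add x (add y z) = add (add x y) z by case: HL => [[]].
have mC : commutative_incline mul by case: HL => [_ []].
apply: (L_trans hA (y := mul y u)).
  by rewrite (mC x) (mC y); apply: L_monol HL _ _ _ e1.
exact: L_monol HL _ _ _ e2.
Qed.

Lemma L_mulle T add mul (zero one : T) (HL : normal_incline add mul zero one) x y :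
  ile add (mul x y) x.
Proof. destrL HL. by rewrite /ile hC absb. Qed.

Lemma L_addle T add mul (zero one : T) (HL : normal_incline add mul zero one) x y z :
  ile add x z -> ile add y z -> ile add (add x y) z.
Proof. destrL HL. by rewrite /ile => e1 e2; rewrite -hA e2 e1. Qed.

Lemma L_lel T add mul (zero one : T) (HL : normal_incline add mul zero one) x y :
  ile add x (add x y).
Proof. destrL HL. by rewrite /ile hA hI. Qed.

Lemma L_antisym T (add : T -> T -> T) x y :
  (forall x y, add x y = add y x) -> ile add x y -> ile add y x -> x = y.
Proof. by rewrite /ile => hC e1 e2; rewrite -e1 hC e2. Qed.

Lemma L_div T add mul (zero one : T) (HL : normal_incline add mul zero one) x a :
  ile add x a -> exists t, x = mul a t.
Proof.
move=> le. have HL' := HL. destrL HL'.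
have [_ [_ down]] := hLI a.
have ga : gen_r_ideal add mul a a by move=> J _.
have := down a x ga le (fun x => exists t, x = mul a t).
apply; last by exists one; rewrite (proj2 (h1 a)).
split; first by exists a; exists one; rewrite (proj2 (h1 a)).
split; first by move=> u v [t1 ->] [t2 ->]; exists (add t1 t2); rewrite dist.
move=> u b [t ->]; split.
  by exists (mul t b); rewrite mC -mA.
by exists (mul t b); rewrite mA.
Qed.

Lemma L_sqle T add mul (zero one : T) (HL : normal_incline add mul zero one)
  (Htot : totally_ordered add) x y :
  ile add (mul x x) (mul y y) -> ile add x y.
Proof.
move=> le. case: (Htot x y) => // le3.
have hC : forall x y, add x y = add y x by case: HL => [[_ []]].
have hI : forall x, add x x = x by case: HL => [[_ [_ []]]].
have e : mul x x = mul y y.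
  apply: (L_antisym hC le); exact: (L_mono2 HL le3 le3).
have hsq : unique_sqrt_property mul by case: HL => [_ [_ [_ [_ [_ []]]]]].
case: (hsq (mul y y)) => c [_ uc].
by rewrite (uc x e) (uc y erefl) /ile hI.
Qed.

Lemma L_termle T add mul (zero one : T) (HL : normal_incline add mul zero one)
  k (F : 'I_k -> T) l : ile add (F l) (\big[add/zero]_(l0 < k) F l0).
Proof.
have hA : forall x y z, add x (add y z) = add (add x y) z by case: HL => [[]].
have hC : forall x y, add x y = add y x by case: HL => [[_ []]].
elim: k F l => [|k IH] F l; first by case: l.
rewrite big_ord_recl.
case: (unliftP ord0 l) => [l'|] ->.
  apply: (L_trans hA (IH (fun i => F (lift ord0 i)) l')); rewrite hC; exact: (L_lel HL).
exact: (L_lel HL).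
Qed.

Lemma L_sumle T add mul (zero one : T) (HL : normal_incline add mul zero one)
  k (F : 'I_k -> T) b : (forall l, ile add (F l) b) ->
  ile add (\big[add/zero]_(l0 < k) F l0) b.
Proof.
move=> H; apply: (big_ind (fun x => ile add x b)).
- by rewrite /ile; case: HL => [_ [_ [h0 _]]]; rewrite (proj1 (h0 _)).
- by move=> x y; apply: (L_addle HL).
- by move=> l _; apply: H.
Qed.

Lemma L_sym T add mul (zero one : T) (HL : normal_incline add mul zero one)
  n k (A : 'I_n -> 'I_n -> T) (B : 'I_n -> 'I_k -> T)
  (HB : forall i j, A i j = mx_mul_tr add mul zero B B i j) i j : A i j = A j i.
Proof.
have mC : commutative_incline mul by case: HL => [_ []].
by rewrite !HB /mx_mul_tr; apply: eq_bigr => l _; rewrite mC.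
Qed.

Lemma L_bnd T add mul (zero one : T) (HL : normal_incline add mul zero one)
  (Htot : totally_ordered add)
  n k (A : 'I_n -> 'I_n -> T) (B : 'I_n -> 'I_k -> T)
  (HB : forall i j, A i j = mx_mul_tr add mul zero B B i j) i j si sj :
  mul si si = A i i -> mul sj sj = A j j -> exists t, A i j = mul (mul si sj) t.
Proof.
move=> ei ej; apply: (L_div HL).
have les : forall i s l, mul s s = A i i -> ile add (B i l) s.
  move=> i0 s l e; apply: (L_sqle HL Htot); rewrite e HB.
  exact: (L_termle HL (fun l0 => mul (B i0 l0) (B i0 l0))).
rewrite HB; apply: (L_sumle HL) => l.
exact: (L_mono2 HL (les _ _ _ ei) (les _ _ _ ej)).
Qed.

Definition o0 : 'I_3 := @Ordinal 3 0 isT.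
Definition o1 : 'I_3 := @Ordinal 3 1 isT.
Definition o2 : 'I_3 := @Ordinal 3 2 isT.

Lemma ord3P (P : 'I_3 -> Prop) : P o0 -> P o1 -> P o2 -> forall i, P i.
Proof.
move=> H0 H1 H2 [[|[|[|m]]] Hm] //.
- by have -> : Ordinal Hm = o0 by apply: val_inj.
- by have -> : Ordinal Hm = o1 by apply: val_inj.
- by have -> : Ordinal Hm = o2 by apply: val_inj.
Qed.

Definition p0 : 'I_2 := @Ordinal 2 0 isT.
Definition p1 : 'I_2 := @Ordinal 2 1 isT.

Lemma ord2P (P : 'I_2 -> Prop) : P p0 -> P p1 -> forall i, P i.
Proof.
move=> H0 H1 [[|[|m]] Hm] //.
- by have -> : Ordinal Hm = p0 by apply: val_inj.
- by have -> : Ordinal Hm = p1 by apply: val_inj.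
Qed.

Definition M3 T (mul : T -> T -> T) s0 s1 s2 t01 t02 t12 (i j : 'I_3) : T :=
  match nat_of_ord i, nat_of_ord j with
  | 0, 0 => mul s0 s0 | 1, 1 => mul s1 s1 | 2, 2 => mul s2 s2
  | 0, 1 => mul (mul s0 s1) t01 | 1, 0 => mul (mul s1 s0) t01
  | 0, 2 => mul (mul s0 s2) t02 | 2, 0 => mul (mul s2 s0) t02
  | 1, 2 => mul (mul s1 s2) t12 | 2, 1 => mul (mul s2 s1) t12
  | _, _ => s0 end.

Definition B3 T (mul : T -> T -> T) (zero : T) s0 s1 s2 t01 t02 t12 (i l : 'I_3) : T :=
  match nat_of_ord i, nat_of_ord l with
  | 0, 0 => s0 | 1, 0 => mul s1 t01 | 2, 0 => mul s2 t02
  | 1, 1 => s1 | 2, 1 => mul s2 t12 | 2, 2 => s2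
  | _, _ => zero end.

Lemma L_ACA T add mul (zero one : T) (HL : normal_incline add mul zero one) a b c d :
  mul (mul a b) (mul c d) = mul (mul a c) (mul b d).
Proof.
destrL HL. by rewrite -!mA (mA b) (mC b c) -mA.
Qed.

Lemma core3 T add mul (zero one : T) (HL : normal_incline add mul zero one)
  s0 s1 s2 t01 t02 t12 : ile add (mul t01 t02) t12 ->
  forall i j, mx_mul_tr add mul zero (B3 mul zero s0 s1 s2 t01 t02 t12)
                (B3 mul zero s0 s1 s2 t01 t02 t12) i j
              = M3 mul s0 s1 s2 t01 t02 t12 i j.
Proof.
move=> ht.
have z := L_mul0 HL. have HL' := HL. destrL HL'.
have sq : forall s t, ile add (mul (mul s t) (mul s t)) (mul s s).
  by move=> s t; apply: (L_mono2 HL); apply: (L_mulle HL).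
apply: ord3P; apply: ord3P;
rewrite /mx_mul_tr !big_ord_recl big_ord0 /B3 /M3 /=;
rewrite ?(proj1 (z _)) ?(proj2 (z _)) ?(proj1 (h0 _)) ?(proj2 (h0 _)) //.
all: try by rewrite mA.
all: try by rewrite -mA (mC _ s0) mA.
all: try by rewrite sq.
all: try by rewrite hC sq.
all: try by rewrite (hC _ (mul s2 s2)) !hA !sq (sq s2 t12).
- by rewrite (mA s1 s2 t12) (L_ACA HL); apply: (L_monol HL).
- rewrite (mC (mul s2 t02)) (mC (mul s2 t12) s1) (mC s2 s1).
  by rewrite (mA s1 s2 t12) (L_ACA HL); apply: (L_monol HL).
- by rewrite (sq s2 t12) (sq s2 t02).
Qed.

Definition M2 T (mul : T -> T -> T) s0 s1 t01 (i j : 'I_2) : T :=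
  match nat_of_ord i, nat_of_ord j with
  | 0, 0 => mul s0 s0 | 1, 1 => mul s1 s1
  | 0, 1 => mul (mul s0 s1) t01 | 1, 0 => mul (mul s1 s0) t01
  | _, _ => s0 end.

Definition B2 T (mul : T -> T -> T) (zero : T) s0 s1 t01 (i l : 'I_2) : T :=
  match nat_of_ord i, nat_of_ord l with
  | 0, 0 => s0 | 1, 0 => mul s1 t01 | 1, 1 => s1
  | _, _ => zero end.

Lemma core2 T add mul (zero one : T) (HL : normal_incline add mul zero one)
  s0 s1 t01 :
  forall i j, mx_mul_tr add mul zero (B2 mul zero s0 s1 t01)
                (B2 mul zero s0 s1 t01) i j
              = M2 mul s0 s1 t01 i j.
Proof.
have z := L_mul0 HL. have HL' := HL. destrL HL'.
have sq : forall s t, ile add (mul (mul s t) (mul s t)) (mul s s).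
  by move=> s t; apply: (L_mono2 HL); apply: (L_mulle HL).
apply: ord2P; apply: ord2P;
rewrite /mx_mul_tr !big_ord_recl big_ord0 /B2 /M2 /=;
rewrite ?(proj1 (z _)) ?(proj2 (z _)) ?(proj1 (h0 _)) ?(proj2 (h0 _)) //.
all: try by rewrite mA.
all: try by rewrite -mA (mC _ s0) mA.
all: try by rewrite sq.
Qed.

Definition tau01 (i : 'I_3) : 'I_3 :=
  match nat_of_ord i with 0 => o1 | 1 => o0 | _ => i end.
Definition tau02 (i : 'I_3) : 'I_3 :=
  match nat_of_ord i with 0 => o2 | 2 => o0 | _ => i end.

Lemma finish3 T add mul (zero one : T) (HL : normal_incline add mul zero one)
  (A : 'I_3 -> 'I_3 -> T) (tau : 'I_3 -> 'I_3) s0 s1 s2 t01 t02 t12 :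
  ile add (mul t01 t02) t12 ->
  (forall i j, A i j = M3 mul s0 s1 s2 t01 t02 t12 (tau i) (tau j)) ->
  cp_rank_le add mul zero A 3.
Proof.
move=> ht H.
have hsq : unique_sqrt_property mul by case: HL => [_ [_ [_ [_ [_ []]]]]].
exists 3, (fun i l => B3 mul zero s0 s1 s2 t01 t02 t12 (tau i) l); split => //; split.
  by move=> i l; case: (hsq (B3 mul zero s0 s1 s2 t01 t02 t12 (tau i) l)) => c [e _]; exists c.
move=> i j; rewrite H.
exact: (esym (core3 HL s0 s1 s2 ht (tau i) (tau j))).
Qed.

Theorem mainTheorem5 (T : Type) (add mul : T -> T -> T) (zero one : T)
  (HL : normal_incline add mul zero one) (Htot : totally_ordered add)
  (n : nat) (Hn : n = 2 \/ n = 3) (A : 'I_n -> 'I_n -> T)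
  (HA : completely_positive add mul zero A) :
  cp_rank_le add mul zero A n.
Proof.
case: HA => k [B [_ HB]].
have hsq : unique_sqrt_property mul by case: HL => [_ [_ [_ [_ [_ []]]]]].
have mC : commutative_incline mul by case: HL => [_ []].
have sqrt : forall x, exists c, mul c c = x by move=> x; case: (hsq x) => c [e _]; exists c.
case: Hn => En; subst n.
- case: (sqrt (A p0 p0)) => s0 e0. case: (sqrt (A p1 p1)) => s1 e1.
  case: (L_bnd HL Htot HB e0 e1) => t01 f01.
  have f10 : A p1 p0 = mul (mul s1 s0) t01 by rewrite (L_sym HL HB) f01 (mC s0).
  exists 2, (B2 mul zero s0 s1 t01); split => //; split.
    by move=> i l; case: (hsq (B2 mul zero s0 s1 t01 i l)) => c [e _]; exists c.
  move=> i j; rewrite (core2 HL); move: i j.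
  by apply: ord2P; apply: ord2P; rewrite /M2 /= ?e0 ?e1 ?f01 ?f10.
- case: (sqrt (A o0 o0)) => s0 e0. case: (sqrt (A o1 o1)) => s1 e1.
  case: (sqrt (A o2 o2)) => s2 e2.
  case: (L_bnd HL Htot HB e0 e1) => t01 f01.
  case: (L_bnd HL Htot HB e0 e2) => t02 f02.
  case: (L_bnd HL Htot HB e1 e2) => t12 f12.
  have f10 : A o1 o0 = mul (mul s1 s0) t01 by rewrite (L_sym HL HB) f01 (mC s0).
  have f20 : A o2 o0 = mul (mul s2 s0) t02 by rewrite (L_sym HL HB) f02 (mC s0).
  have f21 : A o2 o1 = mul (mul s2 s1) t12 by rewrite (L_sym HL HB) f12 (mC s1).
  have hA : forall x y z, add x (add y z) = add (add x y) z by case: HL => [[]].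
  case: (Htot t01 t12) => le1.
    apply: (finish3 HL (tau := id) (s0 := s0) (s1 := s1) (s2 := s2)
      (t01 := t01) (t02 := t02) (t12 := t12)).
      exact: (L_trans hA (L_mulle HL _ _) le1).
    by apply: ord3P; apply: ord3P; rewrite /M3 /= ?e0 ?e1 ?e2 ?f01 ?f10 ?f02 ?f20 ?f12 ?f21.
  case: (Htot t02 t01) => le2.
    apply: (finish3 HL (tau := tau02) (s0 := s2) (s1 := s1) (s2 := s0)
      (t01 := t12) (t02 := t02) (t12 := t01)).
      exact: (L_trans hA (L_mulle HL _ _) le1).
    by apply: ord3P; apply: ord3P; rewrite /M3 /tau02 /= ?e0 ?e1 ?e2 ?f01 ?f10 ?f02 ?f20 ?f12 ?f21.
  apply: (finish3 HL (tau := tau01) (s0 := s1) (s1 := s0) (s2 := s2)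
    (t01 := t01) (t02 := t12) (t12 := t02)).
    exact: (L_trans hA (L_mulle HL _ _) le2).
  by apply: ord3P; apply: ord3P; rewrite /M3 /tau01 /= ?e0 ?e1 ?e2 ?f01 ?f10 ?f02 ?f20 ?f12 ?f21.
Qed.
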